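(* Let $G$ be a connected weighted multigraph on the vertex set $V$, $|V|\ge2$, with positive edge weights, weighted adjacency matrix $A$, spectral radius $\rho$ and Perron vector $p=(p_1,\dots,p_n)^{\mathsf T}$, and let $\Lambda=\rho I-A$. Then for all distinct $i,j\in V$, $$(\Lambda_{jj})^{-1}_i\,a_{\setminus j\,j}=\frac{p_i}{p_j}.$$
   Context: $A=(a_{ij})$ has $a_{ij}$ equal to the sum of weights of the edges joining $i$ and $j$ (loops, multiple edges allowed). The Perron vector $p$ is the positive eigenvector of $A$ for $\rho$ with entries summing to 1. Matrices are indexed by vertices; $\Lambda_{jj}$ is $\Lambda$ with row and column $j$ deleted (indexed by $V\setminus\{j\}$); $N^{-1}_i$ is the row of $N^{-1}$ indexed by $i$; $a_{\setminus j\,j}$ is column $j$ of $A$ with $a_{jj}$ removed. *)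

(* Defs.v *)
From HB Require Import structures.
From mathcomp Require Import all_boot all_order all_algebra.
From mathcomp Require Import complex.
Set Implicit Arguments. Unset Strict Implicit. Unset Printing Implicit Defensive.
Import Order.TTheory GRing.Theory Num.Theory.
Local Open Scope ring_scope.

(* A weighted multigraph on the vertex set 'I_n: a finite set E of edges,
   each edge e has (unordered) endpoints (ends e).1, (ends e).2 (equal for a
   loop) and a weight w e. *)
Definition joins (n : nat) (E : finType) (ends : E -> 'I_n * 'I_n)
  (e : E) (i j : 'I_n) : bool :=
  (((ends e).1 == i) && ((ends e).2 == j)) || (((ends e).1 == j) && ((ends e).2 == i)).

Definition wadj (R : pzRingType) (n : nat) (E : finType)
  (ends : E -> 'I_n * 'I_n) (w : E -> R) : 'M[R]_n :=
  \matrix_(i, j) \sum_(e : E | joins ends e i j) w e.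

Definition mg_connected (n : nat) (E : finType) (ends : E -> 'I_n * 'I_n) : Prop :=
  forall u v : 'I_n, connect [rel x y | [exists e : E, joins ends e x y]] u v.

Definition is_spectral_radius (R : rcfType) (n : nat) (A : 'M[R]_n) (rho : R) : Prop :=
  let Ac := map_mx (fun x : R => (x%:C)%C) A in
  (exists2 l : R[i], eigenvalue Ac l & `|l| = (rho%:C)%C) /\
  (forall l : R[i], eigenvalue Ac l -> `|l| <= (rho%:C)%C).

Definition is_perron_vector (R : rcfType) (n : nat) (A : 'M[R]_n) (rho : R)
  (p : 'cV[R]_n) : Prop :=
  [/\ A *m p = rho *: p, forall i, 0 < p i 0 & \sum_i p i 0 = 1].

(* Main.v *)
Require Import Defs.
From HB Require Import structures.
From mathcomp Require Import all_boot all_order all_algebra.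
From mathcomp Require Import complex.
From mathcomp Require Import lra ring.
Import Order.TTheory GRing.Theory Num.Theory.
Local Open Scope ring_scope.

Theorem lemma8 (R : rcfType) (n : nat) (E : finType)
  (ends : E -> 'I_n * 'I_n) (w : E -> R) (rho : R) (p : 'cV[R]_n) :
  (1 < n)%N ->
  (forall e, 0 < w e) ->
  mg_connected ends ->
  is_spectral_radius (wadj ends w) rho ->
  is_perron_vector (wadj ends w) rho p ->
  let A := wadj ends w in
  let Lam := rho%:M - A in
  forall (j : 'I_n) (i' : 'I_n.-1),
    let Ljj := row' j (col' j Lam) in
    let i := lift j i' in
    Ljj \in unitmx /\
    (row i' (invmx Ljj) *m row' j (col j A)) 0 0 = p i 0 / p j 0.
Proof.
move=> _ wpos conn _ [Ap ppos _] A Lam j i' Ljj i.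
have A0 : forall k l, 0 <= A k l.
  by move=> k l; rewrite /A /wadj mxE; apply: sumr_ge0 => e _; exact: ltW.
have Apos : forall e k l, joins ends e k l -> 0 < A k l.
  move=> e k l He; rewrite /A /wadj mxE (bigD1 e) //=.
  by apply: ltr_wpDr; [apply: sumr_ge0 => f _; exact: ltW | exact: wpos].
have joinsC : forall e k l, joins ends e k l = joins ends e l k.
  by move=> e k l; rewrite /joins orbC.
have LE : forall k l, Ljj k l = rho *+ (k == l) - A (lift j k) (lift j l).
  by move=> k l; rewrite !mxE (inj_eq (@lift_inj _ j)).
have Ap' : forall k, \sum_l A k l * p l 0 = rho * p k 0.
  by move=> k; move/matrixP: Ap => /(_ k 0); rewrite !mxE.
clearbody Ljj Lam A.
have unit : Ljj \in unitmx.
  rewrite unitmxE unitfE; apply/negP => /det0P [v vn0 vL].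
  pose y : 'I_n -> R := fun m => if unlift j m is Some k then `|v 0 k| else 0.
  have yj : y j = 0 by rewrite /y unlift_none.
  have yl : forall k, y (lift j k) = `|v 0 k| by move=> k; rewrite /y liftK.
  have y0 : forall m, 0 <= y m.
    by move=> m; rewrite /y; case: (unlift j m) => // k.
  have sumy : forall l, \sum_m y m * A m l = \sum_k `|v 0 k| * A (lift j k) l.
    by move=> l; rewrite (bigD1_ord j) //= yj mul0r add0r; apply: eq_bigr => k _; rewrite yl.
  have vL' : forall l, \sum_k v 0 k * A (lift j k) (lift j l) = rho * v 0 l.
    move=> l; move/matrixP: vL => /(_ 0 l); rewrite !mxE.
    under eq_bigr do rewrite LE mulrBr.
    rewrite sumrB (bigD1 l) //= eqxx mulr1n big1 ?addr0; last first.
      by move=> k /negbTE ->; rewrite mulr0n mulr0.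
    by move/eqP; rewrite subr_eq0 => /eqP <-; rewrite mulrC.
  have ge : forall l, rho * y l <= \sum_m y m * A m l.
    move=> l; case: (unliftP j l) => [l'|] ->.
      rewrite yl sumy; apply: (le_trans (ler_norm _)); rewrite normrM normr_id -normrM -vL'.
      rewrite (_ : \sum_k `|v 0 k| * _ = \sum_k `|v 0 k * A (lift j k) (lift j l')|).
        exact: ler_norm_sum.
      by apply: eq_bigr => k _; rewrite normrM (ger0_norm (A0 _ _)).
    by rewrite yj mulr0; apply: sumr_ge0 => m _; apply: mulr_ge0.
  have eq0 : \sum_l p l 0 * (\sum_m y m * A m l - rho * y l) = 0.
    under eq_bigr do rewrite mulrBr.
    rewrite sumrB.
    have -> : \sum_l p l 0 * (\sum_m y m * A m l) = \sum_m y m * (rho * p m 0).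
      under eq_bigr do rewrite mulr_sumr.
      rewrite exchange_big /=; apply: eq_bigr => m _.
      by rewrite -Ap' mulr_sumr; apply: eq_bigr => l _; ring.
    by apply/eqP; rewrite subr_eq0; apply/eqP; apply: eq_bigr => m _; ring.
  have ex : forall l, \sum_m y m * A m l = rho * y l.
    move=> l; have := psumr_eq0P (P := predT) _ eq0 (i := l) isT.
    move=> /(_ _)/eqP; rewrite mulf_eq0 gt_eqF ?ppos //= subr_eq0 => /(_ _)/eqP -> //.
    by move=> m _; apply: mulr_ge0; [exact: ltW | rewrite subr_ge0].
  have hlp : forall e x z, joins ends e x z -> y z = 0 -> y x = 0.
    move=> e x z He yz; have := ex z; rewrite yz mulr0 => Hs.
    have := psumr_eq0P (P := predT) _ Hs (i := x) isT.
    move=> /(_ (fun m _ => mulr_ge0 (y0 m) (A0 m z)))/eqP.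
    by rewrite mulf_eq0 (gt_eqF (Apos e x z He)) orbF => /eqP.
  have cl : closed [rel x z | [exists e : E, joins ends e x z]] [pred m | y m == 0].
    move=> x z /= /existsP [e He]; rewrite !inE; apply/eqP/eqP => H.
      by apply: (hlp e z x); rewrite // joinsC.
    exact: (hlp e x z).
  apply/negP: vn0; apply/negPn/eqP/rowP => k; rewrite mxE.
  have := closed_connect cl (conn j (lift j k)); rewrite !inE yj eqxx yl.
  by move/esym/eqP/normr0_eq0.
split=> //.
pose q := row' j p.
have Lq : Ljj *m q = p j 0 *: row' j (col j A).
  apply/matrixP => k z; rewrite (ord1 z) !mxE.
  under eq_bigr do rewrite LE mxE.
  have := Ap' (lift j k); rewrite (bigD1_ord j) //= => H.
  under eq_bigr do rewrite mulrBl.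
  rewrite sumrB (bigD1 k) //= eqxx mulr1n big1 ?addr0; last first.
    by move=> l /negbTE; rewrite eq_sym => ->; rewrite mulr0n mul0r.
  rewrite -H; lra.
have : invmx Ljj *m row' j (col j A) = (p j 0)^-1 *: q.
  have -> : row' j (col j A) = (p j 0)^-1 *: (Ljj *m q).
    by rewrite Lq scalerA mulVf ?gt_eqF // scale1r.
  by rewrite -scalemxAr mulKmx.
move=> H; rewrite -row_mul H !mxE mulrC //.
Qed.
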